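(* Let $\mathbf{x}\in\Sigma_q^*$ with $|\mathbf{x}|\ge 5$ and let $\mathbf{x}'\in D^*(\mathbf{x})$. Suppose $\mathbf{x}=\mathbf{r}\,ab\,\mathbf{t}\,de\,\mathbf{s}$ with $a,b,d,e\in\Sigma_q$, $\mathbf{r},\mathbf{t},\mathbf{s}\in\Sigma_q^*$ and $\mathbf{t}$ nonempty. Then there exist $\mathbf{u},\mathbf{w},\mathbf{v}\in\Sigma_q^*$ such that $\mathbf{x}'=\mathbf{u}\,ab\,\mathbf{w}\,de\,\mathbf{v}$, $\mathbf{u}ab\in D^*(\mathbf{r}ab)$, $ab\mathbf{w}de\in D^*(ab\mathbf{t}de)$, and $de\mathbf{v}\in D^*(de\mathbf{s})$.
   Context: $\Sigma_q=\{0,1,\dots,q-1\}$ with $q\ge 3$; $\Sigma_q^*$ is the set of all finite strings over $\Sigma_q$ (including the empty string). A tandem duplication of length $k$ transforms a string $\mathbf{u}\mathbf{v}\mathbf{w}$ with $|\mathbf{v}|=k$ into $\mathbf{u}\mathbf{v}\mathbf{v}\mathbf{w}$; a $\le 3$-TD is a tandem duplication of length $1$, $2$ or $3$. $D^*(\mathbf{x})$ denotes the set of strings obtainable from $\mathbf{x}$ by finitely many (possibly zero) $\le3$-TDs. *)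

(* Defs.v *)
(* Strings over Sigma_q are sequences of 'I_q. *)
From mathcomp Require Import all_boot.
Set Implicit Arguments. Unset Strict Implicit. Unset Printing Implicit Defensive.

Inductive td3_step (T : Type) : seq T -> seq T -> Prop :=
| TD3 (u v w : seq T) : 1 <= size v <= 3 -> td3_step (u ++ v ++ w) (u ++ v ++ v ++ w).

Inductive Dstar (T : Type) (x : seq T) : seq T -> Prop :=
| Dstar_refl : Dstar x x
| Dstar_step (y z : seq T) : Dstar x y -> td3_step y z -> Dstar x z.

(* Main.v *)
Require Import Defs.
From mathcomp Require Import all_boot.
From mathcomp Require Import zify.

Lemma split_cat {T : Type} {A B C D : seq T} :
  A ++ B = C ++ D -> size A <= size C ->
  exists X, C = A ++ X /\ B = X ++ D.
Proof.
move=> E hs; exists (drop (size A) C).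
have hA : A = take (size A) C.
  by move: (congr1 (take (size A)) E); rewrite take_size_cat // takel_cat.
split; first by rewrite {1}hA cat_take_drop.
move: (congr1 (drop (size A)) E); rewrite drop_size_cat // => ->.
rewrite -{1}(cat_take_drop (size A) C) -catA drop_size_cat //.
by rewrite size_take; case: ltngtP hs => // ->.
Qed.

Lemma window {T : Type} {P m Z L C R : seq T} :
  P ++ m ++ Z = L ++ C ++ R -> size L <= size P ->
  size P + size m <= size L + size C ->
  exists P1 Z1, [/\ P = L ++ P1, Z = Z1 ++ R & C = P1 ++ m ++ Z1].
Proof.
move=> E h1 h2.
have E' : L ++ (C ++ R) = P ++ (m ++ Z) by rewrite E.
have [P1 [hP hB]] := split_cat E' h1.
subst P. move: E; rewrite -catA => /(congr1 (drop (size L))).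
rewrite !drop_size_cat // => E2.
have E3 : (P1 ++ m) ++ Z = C ++ R by rewrite -catA.
have h3 : size C <= size (P1 ++ m) -> size (P1 ++ m) = size C.
  by move=> h; apply/eqP; rewrite eqn_leq h andbT; move: h2; rewrite size_cat !size_cat; lia.
have : size (P1 ++ m) <= size C by move: h2; rewrite !size_cat; lia.
move=> h4.
have [Z1 [hC hZ]] := split_cat E3 h4.
exists P1, Z1; split => //; by rewrite hC catA.
Qed.

Theorem lemma2 (q : nat) (hq : 3 <= q) (x x' r t s : seq 'I_q) (a b d e : 'I_q) :
  5 <= size x ->
  Dstar x x' ->
  x = r ++ [:: a; b] ++ t ++ [:: d; e] ++ s ->
  t <> [::] ->
  exists u w v : seq 'I_q,
    [/\ x' = u ++ [:: a; b] ++ w ++ [:: d; e] ++ v,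
        Dstar (r ++ [:: a; b]) (u ++ [:: a; b]),
        Dstar ([:: a; b] ++ t ++ [:: d; e]) ([:: a; b] ++ w ++ [:: d; e])
      & Dstar ([:: d; e] ++ s) ([:: d; e] ++ v)].
Proof.
move=> _ HD Hx Ht.
suff: exists u w v : seq 'I_q,
    [/\ x' = u ++ [:: a; b] ++ w ++ [:: d; e] ++ v, w <> [::],
        Dstar (r ++ [:: a; b]) (u ++ [:: a; b]),
        Dstar ([:: a; b] ++ t ++ [:: d; e]) ([:: a; b] ++ w ++ [:: d; e])
      & Dstar ([:: d; e] ++ s) ([:: d; e] ++ v)].
  by case=> u [w [v [? _ ? ? ?]]]; exists u, w, v.
elim: HD => [|y z _ [U [W [V [Hy HW D1 D2 D3]]]] Hst].
  by exists r, t, s; split => //; apply: Dstar_refl.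
case: Hst Hy => P m Z /andP [hk1 hk3] Hy.
have hW : 0 < size W by case: W HW {Hy D2} => //.
set i := size P; set k := size m.
have hsz : size (P ++ m ++ Z) = size (U ++ [:: a; b] ++ W ++ [:: d; e] ++ V) by rewrite Hy.
move: hsz; rewrite !size_cat /= => hsz.
have [c1|c1] := boolP ((i <= size U) && (i + k <= size U + 2)).
-
  move/andP: c1 => [c1a c1b].
  have E : P ++ m ++ Z = [::] ++ (U ++ [:: a; b]) ++ (W ++ [:: d; e] ++ V)
    by rewrite Hy /= -catA.
  have [P1 [Z1 [hP hZ hC]]] := window E (leq0n _) ltac:(rewrite size_cat /=; lia).
  rewrite /= in hP; subst P Z.
  have E2 : P1 ++ (m ++ Z1) = U ++ [:: a; b] by rewrite hC.
  have [X [hU hm]] := split_cat E2 c1a.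
  exists (P1 ++ m ++ X), W, V; split => //.
  + by rewrite -!catA (catA m Z1) hm -!catA.
  + apply: Dstar_step D1 _. rewrite hC -catA -(catA m X) -hm.
    by apply: TD3; rewrite hk1 hk3.
have [c2|c2] := boolP ((size U <= i <= size U + 2 + size W) &&
                       (size U + 2 <= i + k <= size U + 2 + size W + 2)).
-
  move/andP: c2 => [/andP [c2a c2b] /andP [c2c c2d]].
  have E : P ++ m ++ Z = U ++ ([:: a; b] ++ W ++ [:: d; e]) ++ V
    by rewrite Hy -!catA.
  have [P1 [Z1 [hP hZ hC]]] := window E c2a ltac:(rewrite !size_cat /=; lia).
  subst P Z.
  have sP1 : size P1 = i - size U by rewrite /i size_cat; lia.
  have E2 : P1 ++ (m ++ Z1) = ([:: a; b] ++ W) ++ [:: d; e] by rewrite -hC -catA.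
  have [Y [hY hm]] := split_cat E2 ltac:(rewrite size_cat /=; lia).
  have E3 : [:: a; b] ++ (W ++ [:: d; e]) = (P1 ++ m) ++ Z1 by rewrite hC -catA.
  have [X [hX hW2]] := split_cat E3 ltac:(rewrite size_cat /=; lia).
  have Hn : P1 ++ m ++ m ++ Z1 = [:: a; b] ++ (X ++ Y) ++ [:: d; e].
    by rewrite hm catA hX -!catA.
  exists U, (X ++ Y), V; split => //.
  + have HnV := congr1 (cat^~ V) Hn; rewrite /= -!catA in HnV.
    by rewrite -!catA HnV.
  + move=> Hxy.
    have := congr1 size Hn; have := congr1 size hC.
    rewrite Hxy !size_cat /=; lia.
  + apply: Dstar_step D2 _; change (td3_step ([:: a; b] ++ W ++ [:: d; e]) ([:: a; b] ++ (X ++ Y) ++ [:: d; e])); rewrite -Hn hC; by apply: TD3; rewrite hk1 hk3.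
-
  have c3a : size U + 2 + size W <= i by move: c1 c2; lia.
  have c3b : size U + 2 + size W + 2 <= i + k by move: c1 c2; lia.
  have E : P ++ m ++ Z = (U ++ [:: a; b] ++ W) ++ ([:: d; e] ++ V) ++ [::]
    by rewrite Hy cats0 -!catA.
  have [P1 [Z1 [hP hZ hC]]] := window E ltac:(rewrite !size_cat /=; lia)
       ltac:(rewrite !size_cat /=; lia).
  rewrite cats0 in hZ; subst P Z.
  have sP1 : size P1 + k >= 2 by move: c3b; rewrite /i !size_cat /=; lia.
  have E2 : [:: d; e] ++ V = (P1 ++ m) ++ Z1 by rewrite hC catA.
  have [X [hX hV]] := split_cat E2 ltac:(rewrite size_cat /=; lia).
  exists U, W, (X ++ m ++ Z1); split => //.
  + have hX2 := congr1 (cat^~ (m ++ Z1)) hX; rewrite /= -!catA in hX2.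
    by rewrite -!catA hX2.
  + apply: Dstar_step D3 _.
    have H3 : [:: d; e] ++ X ++ m ++ Z1 = P1 ++ m ++ m ++ Z1
      by rewrite catA -hX -catA.
    change (td3_step ([:: d; e] ++ V) ([:: d; e] ++ X ++ m ++ Z1)).
    rewrite H3 hC; by apply: TD3; rewrite hk1 hk3.
Qed.
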